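(* Let $\epsilon$ be an inversion sequence and let $\epsilon'$ be the result of applying Algorithm A (described below) to $\epsilon$. If position $i$ is a transient occurrence of $p$ when Algorithm A is applied to $\epsilon$, then position $i$ is also a transient occurrence of $p$ when Algorithm A is applied to $\epsilon'$.
   Context: An inversion sequence of length $n$ is an integer sequence with $0\le\epsilon_i<i$ for all $i$. The reduction of an integer word replaces each occurrence of its $k$-th smallest distinct value by $k-1$; a consecutive pattern $\underline{p_1p_2p_3p_4}$ occurs in a sequence at position $i$ if the reduction of its entries in positions $i,\dots,i+3$ equals $p_1p_2p_3p_4$. Let $p=\underline{0102}$ and $q=\underline{0112}$. Algorithm A, on input an integer sequence $\mathrm{seq}=\epsilon_1\cdots\epsilon_n$: let $E_p$, $E_q$ be the sets of positions of occurrences of $p$, resp. $q$, in the input sequence; set $\mathrm{last}:=$ null. For $i=1,2,\dots,n$ in order: let $N_p,N_q$ be the sets of positions of occurrences of $p$, resp. $q$, in the current sequence. If $i-2\in E_p$: set $\mathrm{last}:=\mathrm{seq}[i]$ and $\mathrm{seq}[i]:=\mathrm{seq}[i-1]$. Else if $i-2\in E_q$: set $\mathrm{last}:=\mathrm{seq}[i]$ and $\mathrm{seq}[i]:=\mathrm{seq}[i-2]$. Else if $i-2\in N_p$ or $i-2\in N_q$: swap the values of $\mathrm{seq}[i]$ and $\mathrm{last}$. Output $\mathrm{seq}$. For an input $\alpha$ with output $\alpha'$: position $i$ is an original occurrence of $p$ (for this run) if $\alpha_i=\alpha_{i+2}$ and $\alpha_i<\alpha_{i+1}<\alpha_{i+3}$;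 it is a transient occurrence of $p$ (for this run) if it is not an original occurrence of $p$ but $\alpha'_i=\alpha_{i+2}$ and $\alpha'_i<\alpha_{i+1}<\alpha_{i+3}$. *)

(* Defs.v *)
From mathcomp Require Import all_boot.
Set Implicit Arguments. Unset Strict Implicit. Unset Printing Implicit Defensive.

(* Sequences are lists of naturals; positions are 1-indexed as in the paper:
   position i of s is the entry nth 0 s (i-1). *)
Definition at_ (s : seq nat) (i : nat) : nat := nth 0 s i.-1.
Definition set_at (s : seq nat) (i v : nat) : seq nat := set_nth 0 s i.-1 v.

Definition is_inversion_seq (s : seq nat) : bool :=
  all (fun i => at_ s i < i) (iota 1 (size s)).

Definition reduction (w : seq nat) : seq nat :=
  let vals := sort leq (undup w) in [seq index x vals | x <- w].

Definition occurs (pat s : seq nat) (j : nat) : bool :=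
  (1 <= j) && (j + 3 <= size s) && (reduction (take 4 (drop j.-1 s)) == pat).

Definition pat_p : seq nat := [:: 0; 1; 0; 2].
Definition pat_q : seq nat := [:: 0; 1; 1; 2].

(* one iteration (index i) of Algorithm A; state = (current seq, last) *)
Definition algA_step (input : seq nat) (st : seq nat * option nat) (i : nat)
  : seq nat * option nat :=
  let: (s, last) := st in
  if occurs pat_p input (i - 2) then (set_at s i (at_ s i.-1), Some (at_ s i))
  else if occurs pat_q input (i - 2) then (set_at s i (at_ s (i - 2)), Some (at_ s i))
  else if occurs pat_p s (i - 2) || occurs pat_q s (i - 2) then
    match last with
    | Some v => (set_at s i v, Some (at_ s i))
    | None => (s, None)
    end
  else (s, last).

Definition algA (input : seq nat) : seq nat :=
  (foldl (algA_step input) (input, None) (iota 1 (size input))).1.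

Definition original_occ_p (a : seq nat) (i : nat) : bool :=
  (at_ a i == at_ a (i + 2)) && (at_ a i < at_ a (i + 1)) && (at_ a (i + 1) < at_ a (i + 3)).

Definition transient_occ_p (a : seq nat) (i : nat) : bool :=
  let a' := algA a in
  (1 <= i) && (i + 3 <= size a) && ~~ original_occ_p a i &&
  (at_ a' i == at_ a (i + 2)) && (at_ a' i < at_ a (i + 1)) && (at_ a (i + 1) < at_ a (i + 3)).

(* Main.v *)
Require Import Defs.
From mathcomp Require Import all_boot.
From mathcomp Require Import zify.
Set Implicit Arguments. Unset Strict Implicit. Unset Printing Implicit Defensive.

Section Red.
Variable w : seq nat.
Let vals := sort leq (undup w).

Lemma vals_sorted : sorted leq vals.
Proof. apply: sort_sorted; exact: leq_total. Qed.
Lemma vals_uniq : uniq vals.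
Proof. by rewrite sort_uniq undup_uniq. Qed.
Lemma mem_vals x : (x \in vals) = (x \in w).
Proof. by rewrite mem_sort mem_undup. Qed.

Lemma idx_eq x y : x \in w -> y \in w -> (index x vals == index y vals) = (x == y).
Proof.
move=> hx hy; apply/eqP/eqP => [h|->] //.
rewrite -mem_vals in hx; rewrite -mem_vals in hy.
by rewrite -(nth_index 0 hx) -(nth_index 0 hy) h.
Qed.

Lemma idx_lt x y : x \in w -> y \in w -> (index x vals < index y vals) = (x < y).
Proof.
move=> hx hy; have hx' := hx; have hy' := hy.
rewrite -mem_vals in hx'; rewrite -mem_vals in hy'.
apply/idP/idP => h.
- have := sorted_ltn_index leq_trans vals_sorted x y hx' hy' h.
  rewrite leq_eqVlt => /orP [/eqP E|//].
  by move: h; rewrite E ltnn.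
- rewrite ltnNge; apply/negP => h2.
  have := sorted_leq_index leq_trans leqnn vals_sorted y x hy' hx' h2.
  by rewrite leqNgt h.
Qed.

Lemma idx_size x : x \in w -> index x vals < size (undup w).
Proof. by move=> hx; rewrite -(size_sort leq) index_mem mem_vals. Qed.
End Red.

Lemma red_p a b c d :
  (reduction [:: a; b; c; d] == pat_p) = [&& a == c, a < b & b < d].
Proof.
set w := [:: a; b; c; d].
have ha : a \in w by rewrite !inE eqxx.
have hb : b \in w by rewrite !inE eqxx !orbT.
have hc : c \in w by rewrite !inE eqxx !orbT.
have hd : d \in w by rewrite !inE eqxx !orbT.
have ia := idx_size ha; have ib := idx_size hb; have ic := idx_size hc; have id := idx_size hd.
have lab := idx_lt ha hb; have lbd := idx_lt hb hd; have eac := idx_eq ha hc.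
rewrite /reduction -/w /pat_p.
set vals := sort leq (undup w).
rewrite -/vals in lab lbd eac.
rewrite /=.
apply/idP/idP.
- case/andP => /eqP h1 /andP [/eqP h2 /andP [/eqP h3 /andP [/eqP h4 _]]].
  by rewrite -eac -lab -lbd h1 h2 h3 h4.
- case/and3P => /eqP Eac hab hbd.
  have s3 : size (undup w) <= 3.
    rewrite /w Eac /= !inE eqxx orbT; case: ifP => _; case: ifP => _ //.
  rewrite -lab in hab; rewrite -lbd in hbd.
  have i2 : index a vals = index c vals by rewrite Eac.
  rewrite -/vals in ia ib ic id.
  apply/eqP; repeat f_equal; lia.
Qed.

Lemma red_q a b c d :
  (reduction [:: a; b; c; d] == pat_q) = [&& a < b, b == c & c < d].
Proof.
set w := [:: a; b; c; d].
have ha : a \in w by rewrite !inE eqxx.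
have hb : b \in w by rewrite !inE eqxx !orbT.
have hc : c \in w by rewrite !inE eqxx !orbT.
have hd : d \in w by rewrite !inE eqxx !orbT.
have ia := idx_size ha; have ib := idx_size hb; have ic := idx_size hc; have id := idx_size hd.
have lab := idx_lt ha hb; have lcd := idx_lt hc hd; have ebc := idx_eq hb hc.
rewrite /reduction -/w /pat_q.
set vals := sort leq (undup w).
rewrite -/vals in lab lcd ebc.
rewrite /=.
apply/idP/idP.
- case/andP => /eqP h1 /andP [/eqP h2 /andP [/eqP h3 /andP [/eqP h4 _]]].
  by rewrite -ebc -lab -lcd h1 h2 h3 h4.
- case/and3P => hab /eqP Ebc hcd.
  have s3 : size (undup w) <= 3.
    rewrite /w Ebc /= !inE eqxx ?orbT; case: ifP => _; case: ifP => _ //.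
  rewrite -lab in hab; rewrite -lcd in hcd.
  have i2 : index b vals = index c vals by rewrite Ebc.
  rewrite -/vals in ia ib ic id.
  apply/eqP; repeat f_equal; lia.
Qed.

Lemma take4 (s : seq nat) j : j + 4 <= size s ->
  take 4 (drop j s) = [:: nth 0 s j; nth 0 s j.+1; nth 0 s j.+2; nth 0 s j.+3].
Proof.
move=> h.
rewrite (drop_nth 0); last lia.
rewrite (drop_nth 0 (n:=j.+1)); last lia.
rewrite (drop_nth 0 (n:=j.+2)); last lia.
rewrite (drop_nth 0 (n:=j.+3)); [by rewrite /= take0 | lia].
Qed.

Lemma occurs_pE s j : occurs pat_p s j =
  [&& 1 <= j, j + 3 <= size s, at_ s j == at_ s (j+2), at_ s j < at_ s (j+1) & at_ s (j+1) < at_ s (j+3)].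
Proof.
rewrite /occurs /at_; case: j => [|j] //=.
case: (leqP (j.+1 + 3) (size s)) => h /=; last by [].
rewrite take4; last by lia.
rewrite red_p.
by rewrite !addnS !addn0.
Qed.

Lemma occurs_qE s j : occurs pat_q s j =
  [&& 1 <= j, j + 3 <= size s, at_ s j < at_ s (j+1), at_ s (j+1) == at_ s (j+2) & at_ s (j+2) < at_ s (j+3)].
Proof.
rewrite /occurs /at_; case: j => [|j] //=.
case: (leqP (j.+1 + 3) (size s)) => h /=; last by [].
rewrite take4; last by lia.
rewrite red_q.
by rewrite !addnS !addn0.
Qed.

Definition pP (a b c d : nat) := [&& a == c, a < b & b < d].
Definition pQ (a b c d : nat) := [&& a < b, b == c & c < d].

Definition stepv (v : bool) (a b c d x y : nat) (l : option nat) : nat * option nat :=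
  if v && pP a b c d then (y, Some c)
  else if v && pQ a b c d then (x, Some c)
  else if v && (pP x y c d || pQ x y c d) then
     match l with Some w => (w, Some c) | None => (c, None) end
  else (c, l).

Lemma S0 v a b c d l : stepv v a b c d a b l =
  if v && (pP a b c d || pQ a b c d) then (if pP a b c d then b else a, Some c) else (c, l).
Proof. rewrite /stepv; case: v => //=; case: (pP a b c d) => //=; case: (pQ a b c d) => //=. Qed.

Lemma S1 v a b c d y l : y <= a -> b <= a -> stepv v a b c d a y l = (c, l).
Proof.
move=> h1 h2.
have h3 : pP a b c d = false by rewrite /pP; lia.
have h4 : pQ a b c d = false by rewrite /pQ; lia.
have h5 : pP a y c d = false by rewrite /pP; lia.
have h6 : pQ a y c d = false by rewrite /pQ; lia.
by rewrite /stepv h3 h4 h5 h6 !andbF.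
Qed.

Lemma S2 v a b c d x : x < b -> a < b -> x <> a ->
  stepv v a b c d x b (Some a) =
  if v && pP a b c d then (b, Some c) else if v && pQ a b c d then (x, Some c)
  else if v && pP x b c d then (a, Some c) else (c, Some a).
Proof.
move=> h1 h2 h3; rewrite /stepv; case: v => //=; case: ifP => // _; case: ifP => // hq.
have -> : pQ x b c d = false by move: hq; rewrite /pQ; lia.
by rewrite orbF.
Qed.

Definition J a b c x y (l1 l2 : option nat) : Prop :=
  (x = a /\ y = b) \/
  (x = a /\ y <> b /\ y <= a /\ b <= a /\ a < c /\ l1 = Some b /\ l2 = Some y) \/
  (y = b /\ x <> a /\ x < b /\ a < b /\ l1 = Some a /\ l2 = Some x).

Ltac solveJ := rewrite /J;
  first [ left; split; lia
        | right; left; split; [lia|split;[lia|split;[lia|split;[lia|split;[lia|split;[first [reflexivity|f_equal;lia]|first [reflexivity|f_equal;lia]]]]]]]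
        | right; right; split; [lia|split;[lia|split;[lia|split;[lia|split;[first [reflexivity|f_equal;lia]|first [reflexivity|f_equal;lia]]]]]] ].

Ltac pb := first [ by rewrite /pP /pQ; lia | idtac ].

Lemma key (v v' : bool) (a b c d f x y : nat) (l1 l2 : option nat) :
  J a b c x y l1 l2 -> (v' -> v) ->
  let zl := stepv v a b c d x y l1 in
  let w := (stepv v' b c d f y zl.1 zl.2).1 in
  let tl := stepv v x y zl.1 w a b l2 in
  tl.1 = c /\ J b c d y zl.1 zl.2 tl.2.
Proof.
move=> HJ Hv /=.
case: HJ => [[-> ->]|[[-> [Hyb [Hya [Hba [Hac [-> ->]]]]]]|[-> [Hxa [Hxb [Hab [-> ->]]]]]]].
-
  rewrite (@S0 v a b c d l1).
  case: v Hv => Hv; last first.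
    have -> : v' = false by case: v' Hv => // ->.
    rewrite /stepv /=; split => //; solveJ.
  rewrite /=.
  case hP: (pP a b c d) => /=.
    have [E1 [E2 E3]] : a = c /\ a < b /\ b < d by move: hP; rewrite /pP; lia.
    rewrite (@S1 v' b c d f b (Some c)) /=; try lia.
    rewrite (@S0 true a b b d l2).
    have -> : pP a b b d = false by rewrite /pP; lia.
    have -> : pQ a b b d = true by rewrite /pQ; lia.
    rewrite /=; split; [lia|solveJ].
  case hQ: (pQ a b c d) => /=.
    have [E1 [E2 E3]] : a < b /\ b = c /\ c < d by move: hQ; rewrite /pQ; lia.
    rewrite (@S1 v' b c d f a (Some c)) /=; try lia.
    rewrite (@S0 true a b a d l2).
    have -> : pP a b a d = true by rewrite /pP; lia.
    rewrite /=; split; [lia|solveJ].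
  rewrite (@S0 v' b c d f l1).
  case: ifPn => Hw.
    case: ifPn => Hw2.
      rewrite (@S0 true a b c c l2) (_ : pP a b c c || pQ a b c c = false) /=; last by move: Hw Hw2 hP; rewrite /pP /pQ; lia.
      split => //; solveJ.
    rewrite (@S0 true a b c b l2) (_ : pP a b c b || pQ a b c b = false) /=; last by move: Hw Hw2 hP; rewrite /pP /pQ; lia.
    split => //; solveJ.
  rewrite (@S0 true a b c d l2) hP hQ /=; split => //; solveJ.
-
  rewrite (@S1 v a b c d y (Some b)) //= (@S1 v a y c _ b (Some y)) //=; split => //; solveJ.
-
  rewrite (@S2 v a b c d x) //.
  case: v Hv => Hv; last first.
    have -> : v' = false by case: v' Hv => // ->.
    rewrite /stepv /=; split => //; solveJ.
  rewrite /=.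
  case hP: (pP a b c d) => /=.
    have [E1 [E2 E3]] : a = c /\ a < b /\ b < d by move: hP; rewrite /pP; lia.
    rewrite (@S1 v' b c d f b (Some c)) /=; try lia.
    rewrite (@S2 true x b b d a); try lia.
    have -> : pP x b b d = false by rewrite /pP; lia.
    have -> : pQ x b b d = true by rewrite /pQ; lia.
    rewrite /=; split; [lia|solveJ].
  case hQ: (pQ a b c d) => /=.
    have [E1 [E2 E3]] : a < b /\ b = c /\ c < d by move: hQ; rewrite /pQ; lia.
    rewrite (@S1 v' b c d f x (Some c)) /=; try lia.
    rewrite (@S2 true x b x d a); try lia.
    have -> : pP x b x d = true by rewrite /pP; lia.
    rewrite /=; split; [lia|solveJ].
  case hX: (pP x b c d) => /=.
    have [E1 [E2 E3]] : x = c /\ x < b /\ b < d by move: hX; rewrite /pP; lia.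
    rewrite (@S1 v' b c d f a (Some c)) /=; try lia.
    rewrite (@S2 true x b a d a); try lia.
    have -> : pP x b a d = false by rewrite /pP; lia.
    have -> : pQ x b a d = false by rewrite /pQ; lia.
    have -> : pP a b a d = true by rewrite /pP; lia.
    rewrite /=; split; [lia|solveJ].
  rewrite (@S0 v' b c d f (Some a)).
  case: ifPn => Hw.
    case: ifPn => Hw2.
      rewrite (@S2 true x b c c a); try lia.
      have -> : pP x b c c = false by move: Hw Hw2; rewrite /pP /pQ; lia.
      have -> : pQ x b c c = false by move: Hw Hw2; rewrite /pP /pQ; lia.
      have -> : pP a b c c = false by move: Hw Hw2; rewrite /pP /pQ; lia.
      rewrite /=; split => //; solveJ.
    rewrite (@S2 true x b c b a); try lia.
    have -> : pP x b c b = false by move: Hw Hw2; rewrite /pP /pQ; lia.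
    have -> : pQ x b c b = false by move: Hw Hw2; rewrite /pP /pQ; lia.
    have -> : pP a b c b = false by move: Hw Hw2; rewrite /pP /pQ; lia.
    rewrite /=; split => //; solveJ.
  rewrite /= (@S2 true x b c d a); try lia.
  have -> : pQ x b c d = false by move: hQ; rewrite /pQ; lia.
  rewrite hP hX /=; split => //; solveJ.
Qed.

Lemma tail3 (v3 : bool) c d g h u : u < d -> c < d -> u <> c -> d < g ->
    let z3l := stepv true c d u g u d (Some c) in
    z3l.1 = c /\ (stepv v3 d u g h d z3l.1 z3l.2).1 = g.
Proof.
move=> h1 h2 h3 h4 /=.
rewrite (@S2 true c d u g u) //.
have -> : pP c d u g = false by rewrite /pP; lia.
have -> : pQ c d u g = false by rewrite /pQ; lia.
have -> : pP u d u g = true by rewrite /pP; lia.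
by rewrite /= (@S1 v3 d u g h c (Some u)) //=; lia.
Qed.

Lemma trans_local (v3 : bool) a b c d f g h x y l1 l2 : J a b c x y l1 l2 ->
  let z1l := stepv true a b c d x y l1 in
  let z2l := stepv true b c d f y z1l.1 z1l.2 in
  let z3l := stepv true c d f g z1l.1 z2l.1 z2l.2 in
  let z4 := (stepv v3 d f g h z2l.1 z3l.1 z3l.2).1 in
  z1l.1 = f -> f <> c -> f < d -> d < g -> z2l.1 = d /\ z3l.1 = c /\ z4 = g /\ c < d.
Proof.
move=> HJ /=.
case: HJ => [[-> ->]|[[-> [Hyb [Hya [Hba [Hac [-> _]]]]]]|[-> [Hxa [Hxb [Hab [-> _]]]]]]].
- rewrite (@S0 true a b c d l1) /=.
  case hP: (pP a b c d) => /=.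
    have [E1 [E2 E3]] : a = c /\ a < b /\ b < d by move: hP; rewrite /pP; lia.
    move=> <- Hfc Hfd Hdg.
    rewrite (@S1 true b c d b b (Some c)) /=; try lia.
    have [T1 T2] := @tail3 v3 c d g h b Hfd ltac:(lia) Hfc Hdg.
    by repeat split; first [exact T1 | exact T2 | lia].
  case hQ: (pQ a b c d) => /=.
    have [E1 [E2 E3]] : a < b /\ b = c /\ c < d by move: hQ; rewrite /pQ; lia.
    move=> <- Hfc Hfd Hdg.
    rewrite (@S1 true b c d a a (Some c)) /=; try lia.
    have [T1 T2] := @tail3 v3 c d g h a Hfd ltac:(lia) Hfc Hdg.
    by repeat split; first [exact T1 | exact T2 | lia].
  by move=> <- Hfc.
- by rewrite (@S1 true a b c d y (Some b)) //= => <-.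
- rewrite (@S2 true a b c d x) //=.
  case hP: (pP a b c d) => /=.
    have [E1 [E2 E3]] : a = c /\ a < b /\ b < d by move: hP; rewrite /pP; lia.
    move=> <- Hfc Hfd Hdg.
    rewrite (@S1 true b c d b b (Some c)) /=; try lia.
    have [T1 T2] := @tail3 v3 c d g h b Hfd ltac:(lia) Hfc Hdg.
    by repeat split; first [exact T1 | exact T2 | lia].
  case hQ: (pQ a b c d) => /=.
    have [E1 [E2 E3]] : a < b /\ b = c /\ c < d by move: hQ; rewrite /pQ; lia.
    move=> <- Hfc Hfd Hdg.
    rewrite (@S1 true b c d x x (Some c)) /=; try lia.
    have [T1 T2] := @tail3 v3 c d g h x Hfd ltac:(lia) Hfc Hdg.
    by repeat split; first [exact T1 | exact T2 | lia].
  case hX: (pP x b c d) => /=.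
    have [E1 [E2 E3]] : x = c /\ x < b /\ b < d by move: hX; rewrite /pP; lia.
    move=> <- Hfc Hfd Hdg.
    rewrite (@S1 true b c d a a (Some c)) /=; try lia.
    have [T1 T2] := @tail3 v3 c d g h a Hfd ltac:(lia) Hfc Hdg.
    by repeat split; first [exact T1 | exact T2 | lia].
  by move=> <- Hfc.
Qed.

Definition st e k := foldl (algA_step e) (e, None) (iota 1 k).

Lemma stS e k : st e k.+1 = algA_step e (st e k) k.+1.
Proof. by rewrite /st -(addn1 k) iotaD foldl_cat /= add1n addn1. Qed.

Lemma at_set s i w j : 0 < i -> 0 < j ->
  at_ (set_at s i w) j = if j == i then w else at_ s j.
Proof.
move=> hi hj; rewrite /at_ /set_at nth_set_nth /=.
have -> : (j.-1 == i.-1) = (j == i) by apply/eqP/eqP; lia.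
by [].
Qed.

Lemma step_other e cur l i j : 0 < i -> 0 < j -> j != i ->
  at_ (algA_step e (cur, l) i).1 j = at_ cur j.
Proof.
move=> hi hj hji; rewrite /algA_step.
case: ifP => _; first by rewrite /= at_set // (negbTE hji).
case: ifP => _; first by rewrite /= at_set // (negbTE hji).
case: ifP => _ //; case: l => [v|] //=.
by rewrite at_set // (negbTE hji).
Qed.

Lemma step_size e cur l i : 0 < i <= size cur ->
  size (algA_step e (cur, l) i).1 = size cur.
Proof.
move=> hi.
have H : forall w, size (set_at cur i w) = size cur.
  by move=> w; rewrite /set_at size_set_nth; lia.
rewrite /algA_step.
case: ifP => _; first by rewrite /= H.
case: ifP => _; first by rewrite /= H.
case: ifP => _ //; case: l => [v|] //=.
Qed.

Lemma st_size e k : k <= size e -> size (st e k).1 = size e.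
Proof.
elim: k => [|k IH] hk //.
rewrite stS; case E: (st e k) => [cur l].
rewrite step_size; first by rewrite -IH ?E //; lia.
by rewrite -[cur]/((cur, l).1) -E IH; lia.
Qed.

Lemma st_out e k j : k < j -> at_ (st e k).1 j = at_ e j.
Proof.
elim: k => [|k IH] hk //.
rewrite stS; case E: (st e k) => [cur l].
rewrite step_other; try lia.
by rewrite -[cur]/((cur, l).1) -E IH; lia.
Qed.

Lemma st_stable e k m j : 0 < j <= k -> k <= m -> at_ (st e m).1 j = at_ (st e k).1 j.
Proof.
move=> hj; elim: m => [|m IH] hkm.
  by have -> : k = 0 by lia.
case: (ltngtP k m.+1) => h; last by rewrite h.
  rewrite stS; case E: (st e m) => [cur l].
  rewrite step_other; try lia.
  by rewrite -[cur]/((cur, l).1) -E IH; lia.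
lia.
Qed.

Definition outv e j := at_ (algA e) j.

Lemma S_st e k j : 0 < j <= k -> k <= size e -> at_ (st e k).1 j = outv e j.
Proof. by move=> h1 h2; rewrite /outv /algA -/(st e (size e)) (@st_stable e k (size e) j). Qed.

Lemma size_algA e : size (algA e) = size e.
Proof. by rewrite /algA -/(st e (size e)) st_size. Qed.

Lemma occurs_pE' s j : occurs pat_p s j =
  [&& 1 <= j, j.+3 <= size s & pP (at_ s j) (at_ s j.+1) (at_ s j.+2) (at_ s j.+3)].
Proof. by rewrite occurs_pE addn1 addn2 addn3. Qed.
Lemma occurs_qE' s j : occurs pat_q s j =
  [&& 1 <= j, j.+3 <= size s & pQ (at_ s j) (at_ s j.+1) (at_ s j.+2) (at_ s j.+3)].
Proof. by rewrite occurs_qE addn1 addn2 addn3. Qed.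

Lemma stepB e j : 0 < j -> j.+2 <= size e ->
  (at_ (st e j.+2).1 j.+2, (st e j.+2).2) =
  stepv (j.+3 <= size e) (at_ e j) (at_ e j.+1) (at_ e j.+2) (at_ e j.+3)
        (outv e j) (outv e j.+1) (st e j.+1).2.
Proof.
move=> hj hn.
have h0 := @S_st e j.+1 j ltac:(lia) ltac:(lia).
have h1 := @S_st e j.+1 j.+1 ltac:(lia) ltac:(lia).
have h2 := @st_out e j.+1 j.+2 ltac:(lia).
have h3 := @st_out e j.+1 j.+3 ltac:(lia).
have hs := @st_size e j.+1 ltac:(lia).
rewrite stS.
move: h0 h1 h2 h3 hs; case: (st e j.+1) => cur l /= h0 h1 h2 h3 hs.
rewrite /algA_step.
have -> : j.+2 - 2 = j by lia.
rewrite /= !occurs_pE' !occurs_qE' hs h0 h1 h2 h3 hj /=.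
rewrite /stepv.
set v := (j.+3 <= size e).
case: ifP => _; first by rewrite /= at_set // eqxx.
case: ifP => _; first by rewrite /= at_set // eqxx.
rewrite -andb_orr.
case: ifP => _; case: l => [w|] /=; rewrite ?h2 //.
by rewrite at_set // eqxx.
Qed.

Lemma S_small e j : 0 < j -> j <= size e -> (j <= 2) || (j == size e) -> outv e j = at_ e j.
Proof.
move=> h1 h2 h3.
rewrite -(@S_st e j j); try lia.
case: j h1 h2 h3 => [|j] // h1 h2 h3.
have h4 := @st_out e j j.+1 ltac:(lia).
have hs := @st_size e j ltac:(lia).
rewrite stS.
move: h4 hs; case: (st e j) => cur l /= h4 hs.
rewrite /algA_step !occurs_pE' !occurs_qE' hs.
have H0 : ((1 <= j.+1 - 2) && ((j.+1 - 2).+3 <= size e)) = false by lia.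
by rewrite !(andbA (0 < j.+1 - 2)) !H0 /=.
Qed.

Lemma inv e j : 0 < j -> j.+2 <= size e ->
  (forall m, 0 < m <= j.+1 -> outv (algA e) m = at_ e m) /\
  J (at_ e j) (at_ e j.+1) (at_ e j.+2) (outv e j) (outv e j.+1) (st e j.+1).2 (st (algA e) j.+1).2.
Proof.
have hsz := size_algA e.
elim: j => [//|j IH] _ hn.
case: j IH hn => [|j] IH hn.
  have E1 : outv e 1 = at_ e 1 by rewrite S_small //; lia.
  have E2 : outv e 2 = at_ e 2 by rewrite S_small //; lia.
  split.
    move=> m hm; rewrite S_small; try lia.
    have : (m = 1) \/ (m = 2) by lia.
    by case=> ->.
  by left; split.
have [IH1 IHJ] := IH ltac:(lia) ltac:(lia).
have B1 := @stepB e j.+1 ltac:(lia) ltac:(lia).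
have B2 := @stepB e j.+2 ltac:(lia) ltac:(lia).
have B3 := @stepB (algA e) j.+1 ltac:(lia) ltac:(lia).
rewrite hsz in B3.
rewrite (@S_st e j.+3 j.+3) in B1; try lia.
rewrite (@S_st e j.+4 j.+4) in B2; try lia.
rewrite (@S_st (algA e) j.+3 j.+3) in B3; try lia.
rewrite (IH1 j.+1) ?(IH1 j.+2) in B3; try lia.
have Hv : (j.+4.+1 <= size e) -> (j.+4 <= size e) by lia.
have := @key _ _ _ _ _ (at_ e j.+4) (at_ e j.+4.+1) _ _ _ _ IHJ Hv.
rewrite /= -B1 /= -B2 /= -B3 /= => [[H1 H2]].
split => //.
move=> m hm.
case: (ltngtP m j.+3) => h; first by apply: IH1; lia.
  lia.
by rewrite h.
Qed.

Lemma all_eq e m : 0 < m <= size e -> outv (algA e) m = at_ e m.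
Proof.
move=> hm.
have hsz := size_algA e.
case: (boolP ((m <= 2) || (m == size e))) => h.
  rewrite S_small ?hsz //; try lia.
  by rewrite -/(outv e m) S_small //; lia.
have [H _] := @inv e m.-1 ltac:(lia) ltac:(lia).
by apply: H; lia.
Qed.

Lemma invol e : algA (algA e) = e.
Proof.
apply: (@eq_from_nth _ 0); first by rewrite !size_algA.
move=> i; rewrite !size_algA => hi.
by have := @all_eq e i.+1 ltac:(lia); rewrite /outv /at_ /=.
Qed.

Theorem corollary3 (eps : seq nat) (i : nat) :
  is_inversion_seq eps ->
  transient_occ_p eps i ->
  transient_occ_p (algA eps) i.
Proof.
move=> _.
rewrite /transient_occ_p invol /original_occ_p !size_algA.
rewrite -/(outv eps i) -/(outv eps (i + 1)) -/(outv eps (i + 2)) -/(outv eps (i + 3)).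
move=> H.
have [hi1 [hi3 [ho [h4 [h5 h6]]]]] : 1 <= i /\ i + 3 <= size eps /\
   ~~ [&& at_ eps i == at_ eps (i + 2), at_ eps i < at_ eps (i + 1) & at_ eps (i + 1) < at_ eps (i + 3)] /\
   outv eps i = at_ eps (i + 2) /\ outv eps i < at_ eps (i + 1) /\ at_ eps (i + 1) < at_ eps (i + 3).
  move: H; lia.
case: (leqP i 2) => hi2.
  have := @S_small eps i ltac:(lia) ltac:(lia) ltac:(lia).
  lia.
case: i hi1 hi3 ho h4 h5 h6 hi2 {H} => [|[|[|j]]] //= hi1 hi3 ho h4 h5 h6 hi2.
rewrite !addn1 !addn2 !addn3 in ho h4 h5 h6 *.
have [_ HJ] := @inv eps j.+1 ltac:(lia) ltac:(lia).
have B1 := @stepB eps j.+1 ltac:(lia) ltac:(lia).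
have B2 := @stepB eps j.+2 ltac:(lia) ltac:(lia).
have B3 := @stepB eps j.+3 ltac:(lia) ltac:(lia).
have B4 := @stepB eps j.+4 ltac:(lia) ltac:(lia).
rewrite (@S_st eps j.+3 j.+3) in B1; try lia.
rewrite (@S_st eps j.+4 j.+4) in B2; try lia.
rewrite (@S_st eps j.+4.+1 j.+4.+1) in B3; try lia.
rewrite (@S_st eps j.+4.+2 j.+4.+2) in B4; try lia.
have T1 : j.+4 <= size eps by lia.
have T2 : j.+4.+1 <= size eps by lia.
have T3 : j.+4.+2 <= size eps by lia.
rewrite T1 in B1; rewrite T2 in B2; rewrite T3 in B3.
have := @trans_local (j.+4.+3 <= size eps) (at_ eps j.+1) (at_ eps j.+2) (at_ eps j.+3)
  (at_ eps j.+4) (at_ eps j.+4.+1) (at_ eps j.+4.+2) (at_ eps j.+4.+3)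
  (outv eps j.+1) (outv eps j.+2) _ _ HJ.
rewrite /= -B1 /= -B2 /= -B3 /= -B4 /=.
move=> /(_ h4 ltac:(lia) ltac:(lia) h6) [K1 [K2 [K3 K4]]].
rewrite K1 K2 K3.
lia.
Qed.
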